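(* Let $(M,\varphi,\xi,\eta,g)$ be an almost contact metric manifold. If $M$ satisfies the $(G1)$ identity then it satisfies the $(G2)$ identity, and if it satisfies the $(G2)$ identity then it satisfies the $(G3)$ identity. Equivalently, for any class $\mathcal L$ of almost contact metric manifolds, denoting by $\mathcal L_i$ the subclass of those satisfying $(Gi)$, one has $\mathcal L_1\subseteq\mathcal L_2\subseteq\mathcal L_3\subseteq\mathcal L$.
   Context: An almost contact metric manifold $(M,\varphi,\xi,\eta,g)$: $\varphi$ a $(1,1)$-tensor, $\xi$ a vector field, $\eta$ a $1$-form, $g$ a Riemannian metric with $\eta(\xi)=1$, $\varphi^2=-I+\eta\otimes\xi$, $g(\varphi X,\varphi Y)=g(X,Y)-\eta(X)\eta(Y)$. Curvature conventions: $R_{XY}Z=\nabla_X\nabla_YZ-\nabla_Y\nabla_XZ-\nabla_{[X,Y]}Z$, $R(X,Y,Z,W)=-g(R_{XY}Z,W)$. For all $X,Y,Z,W\in\chi(M)$ the identities are: $(G1)$: $R(X,Y,\varphi Z,\varphi W)-R(X,Y,Z,W)=g(Y,\varphi W)g(X,\varphi Z)-g(X,\varphi W)g(Y,\varphi Z)+g(X,W)g(Y,Z)-g(Y,W)g(X,Z)$; $(G2)$: $R(X,Y,Z,W)=R(\varphi X,Y,Z,\varphi W)+R(X,\varphi Y,Z,\varphi W)+R(X,Y,\varphi Z,\varphi W)+g(X,Z)\eta(W)\eta(Y)-g(Z,Y)\eta(X)\eta(W)$; $(G3)$: $R(X,Y,Z,W)=R(\varphi X,\varphi Y,\varphi Z,\varphi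 W)+g(X,Z)\eta(W)\eta(Y)-g(Z,Y)\eta(X)\eta(W)+g(Y,W)\eta(X)\eta(Z)-g(X,W)\eta(Y)\eta(Z)$. *)

(* Defs.v *)
(* Pointwise (tangent-space) model of an almost contact
   metric manifold together with its Riemann curvature tensor. *)
From mathcomp Require Import all_boot all_order all_algebra.
From mathcomp Require Import reals.
Set Implicit Arguments. Unset Strict Implicit. Unset Printing Implicit Defensive.
Import Order.TTheory GRing.Theory Num.Theory.
Local Open Scope ring_scope.

Section Defs.
Variables (R : realType) (V : vectType R).

Definition linear_map (f : V -> V) : Prop :=
  forall (a : R) (x y : V), f (a *: x + y) = a *: f x + f y.

Definition linear_form (f : V -> R) : Prop :=
  forall (a : R) (x y : V), f (a *: x + y) = a * f x + f y.

Definition almost_contact_metric (phi : V -> V) (xi : V) (eta : V -> R)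
    (g : V -> V -> R) : Prop :=
  linear_map phi /\ linear_form eta /\
      (forall y, linear_form (fun x => g x y)) /\
      (forall x y, g x y = g y x) /\
      (forall x, x != 0 -> 0 < g x x) /\
      eta xi = 1 /\
      (forall X, phi (phi X) = - X + eta X *: xi) /\
      (forall X Y, g (phi X) (phi Y) = g X Y - eta X * eta Y).

(* The (0,4) Riemann curvature tensor R(X,Y,Z,W) = -g(R_{XY}Z,W):
   multilinear, with the curvature symmetries and the first Bianchi identity. *)
Definition curvature_tensor (Rt : V -> V -> V -> V -> R) : Prop :=
  (forall Y Z W, linear_form (fun X => Rt X Y Z W)) /\
      (forall X Z W, linear_form (fun Y => Rt X Y Z W)) /\
      (forall X Y W, linear_form (fun Z => Rt X Y Z W)) /\
      (forall X Y Z, linear_form (fun W => Rt X Y Z W)) /\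
      (forall X Y Z W, Rt X Y Z W = - Rt Y X Z W) /\
      (forall X Y Z W, Rt X Y Z W = - Rt X Y W Z) /\
      (forall X Y Z W, Rt X Y Z W = Rt Z W X Y) /\
      (forall X Y Z W, Rt X Y Z W + Rt Y Z X W + Rt Z X Y W = 0).

Definition G1 (phi : V -> V) (eta : V -> R) (g : V -> V -> R)
    (Rt : V -> V -> V -> V -> R) : Prop :=
  forall X Y Z W,
    Rt X Y (phi Z) (phi W) - Rt X Y Z W =
    g Y (phi W) * g X (phi Z) - g X (phi W) * g Y (phi Z)
    + g X W * g Y Z - g Y W * g X Z.

Definition G2 (phi : V -> V) (eta : V -> R) (g : V -> V -> R)
    (Rt : V -> V -> V -> V -> R) : Prop :=
  forall X Y Z W,
    Rt X Y Z W =
    Rt (phi X) Y Z (phi W) + Rt X (phi Y) Z (phi W) + Rt X Y (phi Z) (phi W)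
    + g X Z * eta W * eta Y - g Z Y * eta X * eta W.

Definition G3 (phi : V -> V) (eta : V -> R) (g : V -> V -> R)
    (Rt : V -> V -> V -> V -> R) : Prop :=
  forall X Y Z W,
    Rt X Y Z W =
    Rt (phi X) (phi Y) (phi Z) (phi W)
    + g X Z * eta W * eta Y - g Z Y * eta X * eta W
    + g Y W * eta X * eta Z - g X W * eta Y * eta Z.

End Defs.

(* Main.v *)
Require Import Defs.
From mathcomp Require Import all_boot all_order all_algebra.
From mathcomp Require Import reals.
From mathcomp Require Import ring lra.
Set Implicit Arguments. Unset Strict Implicit. Unset Printing Implicit Defensive.
Import Order.TTheory GRing.Theory Num.Theory.
Local Open Scope ring_scope.

Lemma lfL (R : realType) (V : vectType R) (f : V -> R) a x y :
  linear_form f -> f (a *: x + y) = a * f x + f y.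
Proof. by move=> h; apply: h. Qed.

Lemma lf0 (R : realType) (V : vectType R) (f : V -> R) :
  linear_form f -> f 0 = 0.
Proof.
move=> h; have := h 1 0 0; rewrite scale1r addr0 mul1r => e.
have h2 : f 0 + f 0 - f 0 = f 0 - f 0 by rewrite -e.
by rewrite addrK subrr in h2.
Qed.

Lemma lfNZ (R : realType) (V : vectType R) (f : V -> R) a x y :
  linear_form f -> f (- x + a *: y) = - f x + a * f y.
Proof.
move=> h; rewrite -scaleN1r h.
have := h a y 0; rewrite addr0 (lf0 h) addr0 => ->; by rewrite mulN1r.
Qed.

Lemma lmap0 (R : realType) (V : vectType R) (f : V -> V) :
  linear_map f -> f 0 = 0.
Proof.
move=> h; have := h 1 0 0; rewrite !scale1r addr0 => e.
have h2 : f 0 + f 0 - f 0 = f 0 - f 0 by rewrite -e.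
by rewrite addrK subrr in h2.
Qed.

Lemma lmNZ (R : realType) (V : vectType R) (f : V -> V) a x y :
  linear_map f -> f (- x + a *: y) = - f x + a *: f y.
Proof.
move=> h; rewrite -scaleN1r h.
have := h a y 0; rewrite addr0 (lmap0 h) addr0 => ->; by rewrite scaleN1r.
Qed.

Lemma H2H3 (R : realType) (V : vectType R) (phi : V -> V) (xi : V) (eta : V -> R)
  (T : V -> V -> V -> V -> R) :
  (forall X, phi (phi X) = - X + eta X *: xi) ->
  (forall Y Z W, linear_form (fun X => T X Y Z W)) ->
  (forall X Z W, linear_form (fun Y => T X Y Z W)) ->
  (forall X Y W, linear_form (fun Z => T X Y Z W)) ->
  (forall X Y Z, linear_form (fun W => T X Y Z W)) ->
  (forall Y Z W, T xi Y Z W = 0) ->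
  (forall X Z W, T X xi Z W = 0) ->
  (forall X Y W, T X Y xi W = 0) ->
  (forall X Y Z, T X Y Z xi = 0) ->
  (forall X Y Z W, T X Y Z W =
     T (phi X) Y Z (phi W) + T X (phi Y) Z (phi W) + T X Y (phi Z) (phi W)) ->
  forall X Y Z W, T X Y Z W = T (phi X) (phi Y) (phi Z) (phi W).
Proof.
move=> Hpp L1 L2 L3 L4 Z1 Z2 Z3 Z4 H2.
have J1 : forall X Y Z W, T (phi (phi X)) Y Z W = - T X Y Z W.
  by move=> *; rewrite Hpp (lfNZ _ _ _ (L1 _ _ _)) Z1 mulr0 addr0.
have J2 : forall X Y Z W, T X (phi (phi Y)) Z W = - T X Y Z W.
  by move=> *; rewrite Hpp (lfNZ _ _ _ (L2 _ _ _)) Z2 mulr0 addr0.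
have J3 : forall X Y Z W, T X Y (phi (phi Z)) W = - T X Y Z W.
  by move=> *; rewrite Hpp (lfNZ _ _ _ (L3 _ _ _)) Z3 mulr0 addr0.
have J4 : forall X Y Z W, T X Y Z (phi (phi W)) = - T X Y Z W.
  by move=> *; rewrite Hpp (lfNZ _ _ _ (L4 _ _ _)) Z4 mulr0 addr0.
have D : forall X Y Z W, T (phi X) Y Z W + T X (phi Y) Z W + T X Y (phi Z) W
   + T X Y Z (phi W) = 0.
  move=> X Y Z W; have := H2 X Y Z (phi W); rewrite !J4 => e; lra.
move=> X Y Z W.
have e1 := D (phi X) Y Z W; rewrite !J1 in e1.
have e2 := D X (phi Y) Z W; rewrite !J2 in e2.
have e3 := D (phi X) (phi Y) (phi Z) W; rewrite J1 J2 J3 in e3.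
have e4 := D (phi X) (phi Y) Z (phi W); rewrite J1 J2 J4 in e4.
lra.
Qed.

Definition Sc (R : realType) (V : vectType R) (g : V -> V -> R)
  (Rt : V -> V -> V -> V -> R) X Y Z W :=
  Rt X Y Z W + (g X W * g Y Z - g X Z * g Y W).

Theorem mainTheorem5 (R : realType) (V : vectType R)
    (phi : V -> V) (xi : V) (eta : V -> R) (g : V -> V -> R)
    (Rt : V -> V -> V -> V -> R) :
  almost_contact_metric phi xi eta g ->
  curvature_tensor Rt ->
  (G1 phi eta g Rt -> G2 phi eta g Rt) /\ (G2 phi eta g Rt -> G3 phi eta g Rt).
Proof.
move=> [Lphi [Leta [Lg [gsym [_ [exi [Hpp Hmet]]]]]]].
move=> [R1 [R2 [R3 [R4 [A12 [A34 [Psym _]]]]]]].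
have Lg2 : forall x, linear_form (fun y => g x y).
  by move=> x a u v; rewrite /= !(gsym x) Lg.
have eta0 : eta 0 = 0 by apply: lf0.
have phi0 : phi 0 = 0 by apply: lmap0.
have phi3 : forall X, eta X *: phi xi = eta (phi X) *: xi.
  move=> X; have e1 := Hpp (phi X); rewrite (Hpp X) (lmNZ _ _ _ Lphi) in e1.
  exact: (addrI _ e1).
have xinz : xi != 0.
  by apply/eqP => xi0; move: exi; rewrite xi0 eta0 => /eqP; rewrite eq_sym oner_eq0.
have phixi : phi xi = 0.
  have e := phi3 xi; rewrite exi scale1r in e.
  have e2 := Hpp xi; rewrite exi scale1r addNr in e2.
  have e3 : phi (phi xi) = (eta (phi xi) * eta (phi xi)) *: xi.
    set c := eta (phi xi) in e *.
    have -> : phi (phi xi) = c *: phi xi.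
      by rewrite {1}e; have := Lphi c xi 0; rewrite addr0 phi0 addr0.
    by rewrite e scalerA.
  move: e3; rewrite e2 => /esym/eqP; rewrite scaler_eq0 (negbTE xinz) orbF.
  by rewrite mulf_eq0 orbb => /eqP c0; rewrite e c0 scale0r.
have etaphi : forall X, eta (phi X) = 0.
  move=> X; have := phi3 X; rewrite phixi scaler0 => /eqP; rewrite eq_sym.
  by rewrite scaler_eq0 (negbTE xinz) orbF => /eqP.
have gphi0 : forall X, g X 0 = 0 by move=> X; apply: (lf0 (Lg2 X)).
have geta : forall X, g X xi = eta X.
  move=> X; have := Hmet X xi; rewrite phixi gphi0 exi mulr1 => e; lra.
have gphi : forall X Y, g (phi X) Y = - g X (phi Y).
  move=> X Y; have := Hmet X (phi Y); rewrite Hpp etaphi mulr0 subr0.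
  rewrite (lfNZ _ _ _ (Lg2 _)) geta etaphi mulr0 addr0 => e; lra.
set S := Sc g Rt.
have S1 : forall Y Z W, linear_form (fun X => S X Y Z W).
  move=> Y Z W a x y; rewrite /S /Sc /= (lfL _ _ _ (R1 _ _ _)) !Lg; ring.
have S2 : forall X Z W, linear_form (fun Y => S X Y Z W).
  move=> X Z W a x y; rewrite /S /Sc /= (lfL _ _ _ (R2 _ _ _)) !Lg; ring.
have S3 : forall X Y W, linear_form (fun Z => S X Y Z W).
  move=> X Y W a x y; rewrite /S /Sc /= (lfL _ _ _ (R3 _ _ _)) !Lg2; ring.
have S4 : forall X Y Z, linear_form (fun W => S X Y Z W).
  move=> X Y Z a x y; rewrite /S /Sc /= (lfL _ _ _ (R4 _ _ _)) !Lg2; ring.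
have SA12 : forall X Y Z W, S X Y Z W = - S Y X Z W.
  by move=> X Y Z W; rewrite /S /Sc A12; ring.
have SA34 : forall X Y Z W, S X Y Z W = - S X Y W Z.
  by move=> X Y Z W; rewrite /S /Sc A34; ring.
have SP : forall X Y Z W, S X Y Z W = S Z W X Y.
  by move=> X Y Z W; rewrite /S /Sc Psym (gsym X W) (gsym Y Z) (gsym X Z)
    (gsym Y W); ring.
have Zall : (forall X Y Z, S X Y Z xi = 0) ->
  (forall Y Z W, S xi Y Z W = 0) /\ (forall X Z W, S X xi Z W = 0) /\
  (forall X Y W, S X Y xi W = 0).
  move=> Z4; split; last split.
  - by move=> Y Z W; rewrite SP SA34 Z4 oppr0.
  - by move=> X Z W; rewrite SP Z4.
  - by move=> X Y W; rewrite SA34 Z4 oppr0.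
split.
- move=> HG1.
  have I34 : forall X Y Z W, S X Y (phi Z) (phi W) = S X Y Z W.
    move=> X Y Z W; rewrite /S /Sc; have := HG1 X Y Z W.
    move=> e; lra.
  have I12 : forall X Y Z W, S (phi X) (phi Y) Z W = S X Y Z W.
    by move=> X Y Z W; rewrite SP I34 -SP.
  have Z4 : forall X Y Z, S X Y Z xi = 0.
    by move=> X Y Z; rewrite -(I34 X Y Z xi) phixi (lf0 (S4 _ _ _)).
  have [Z1 _] := Zall Z4.
  have H2S : forall X Y Z W, S X Y Z W =
     S (phi X) Y Z (phi W) + S X (phi Y) Z (phi W) + S X Y (phi Z) (phi W).
    move=> X Y Z W; rewrite I34 -(I12 (phi X)) Hpp (lfNZ _ _ _ (S1 _ _ _)) Z1.
    by rewrite mulr0 addr0 addNr add0r.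
  move=> X Y Z W; have := H2S X Y Z W; rewrite /S /Sc !Hmet !gphi (gsym Z Y).
  move=> e; lra.
- move=> HG2.
  have H2S : forall X Y Z W, S X Y Z W =
     S (phi X) Y Z (phi W) + S X (phi Y) Z (phi W) + S X Y (phi Z) (phi W).
    move=> X Y Z W; rewrite /S /Sc HG2 !Hmet !gphi (gsym Z Y); lra.
  have Z4 : forall X Y Z, S X Y Z xi = 0.
    by move=> X Y Z; rewrite H2S phixi !(lf0 (S4 _ _ _)) !addr0.
  have [Z1 [Z2 Z3]] := Zall Z4.
  have H3 := H2H3 Hpp S1 S2 S3 S4 Z1 Z2 Z3 Z4 H2S.
  move=> X Y Z W; have := H3 X Y Z W; rewrite /S /Sc !Hmet (gsym Z Y).
  move=> e; lra.
Qed.
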